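(* Let $n\geq1$, $1\leq l\leq n$, $m\leq n-l+1$ and $\eta\in\Omega$. Let $(a_{\bar w})_{\bar w\in\overline{T_\eta}}$ be complex numbers with $\sum_{\bar w\in\overline{T_\eta}}a_{\bar w}\bar w=0$ in $\mathbb C^{\lambda_{2,n}}$. Suppose $E=\{(c_1,l),\ldots,(c_m,l)\}\subset T_\eta$ for some $0<c_1<\cdots<c_m$, and that $a_{\bar u}=0$ for every $u\in T_\eta\setminus E$ with $\pi_2(u)\geq l$. Then $a_{\bar v}=0$ for all $v\in E$. The same holds with $E=\{(l,c_1),\ldots,(l,c_m)\}$ and the condition $\pi_2(u)\geq l$ replaced by $\pi_1(u)\geq l$.
   Context: $\pi_i$ is the $i$-th coordinate. $\Lambda_{2,n}=\{\alpha\in\mathbb N^2:1\leq\alpha_1+\alpha_2\leq n\}$, $\lambda_{2,n}=|\Lambda_{2,n}|$; $\bar v=\big(\binom{v_1}{\alpha_1}\binom{v_2}{\alpha_2}\big)_{\alpha\in\Lambda_{2,n}}$. $\Omega$ is the set of $\eta=(z,d_0,\ldots,d_r)$ with $z\in\{0,1\}$, $d_0=0$, $d_i\geq1$, $\sum d_i=n$. For $1\leq j\leq n$, $t$ unique with $\sum_{i<t}d_i<j\leq\sum_{i\leq t}d_i$, $c=j-\sum_{i<t}d_i$; $v_{j,\eta}=(\sum_{i\text{ odd},i<t}d_i+c,0)$ if $z=1,t$ odd; $(0,\sum_{i\text{ even},i<t}d_i+c)$ if $z=1,t$ even; $(0,\sum_{i\text{ odd},i<t}d_i+c)$ if $z=0,t$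 odd; $(\sum_{i\text{ even},i<t}d_i+c,0)$ if $z=0,t$ even. $T_{j,\eta}=\{v_{j,\eta}+p(1,1):0\leq p\leq n-j\}$, $T_{0,\eta}=\{(p,p):1\leq p\leq n\}$, $T_\eta=\bigcup_{j=0}^nT_{j,\eta}$, $\overline{T_\eta}=\{\bar w:w\in T_\eta\}$ (distinct elements of $T_\eta$ give distinct vectors). *)

(* Defs.v *)
From HB Require Import structures.
From mathcomp Require Import all_boot all_order all_algebra.
From mathcomp Require Import Rstruct complex.
From Stdlib Require Rdefinitions.
Set Implicit Arguments. Unset Strict Implicit. Unset Printing Implicit Defensive.

Definition CC : numClosedFieldType := (Rdefinitions.R)[i].

(* eta = (z, d_0, d_1, ..., d_r) is encoded as (z, [:: d_1; ...; d_r]),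
   with z = true meaning z = 1 and z = false meaning z = 0; d_0 = 0 implicit. *)
Definition eta_t := (bool * seq nat)%type.

Definition in_Omega (n : nat) (eta : eta_t) : bool :=
  all (fun d => 0 < d) eta.2 && (sumn eta.2 == n).

Definition dd (ds : seq nat) (i : nat) : nat :=
  if i is i'.+1 then nth 0 ds i' else 0.

Definition Spre (ds : seq nat) (t : nat) : nat := \sum_(i < t) dd ds i.
Definition Sodd (ds : seq nat) (t : nat) : nat := \sum_(i < t | odd i) dd ds i.
Definition Seven (ds : seq nat) (t : nat) : nat := \sum_(i < t | ~~ odd i) dd ds i.

(* the (unique) t with sum_{i<t} d_i < j <= sum_{i<=t} d_i,
   computed as the least t with j <= sum_{i<=t} d_i *)
Definition tidx (ds : seq nat) (j : nat) : nat :=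
  find (fun t => j <= Spre ds t.+1) (iota 0 (size ds).+1).

Definition vj (eta : eta_t) (j : nat) : nat * nat :=
  let ds := eta.2 in
  let t := tidx ds j in
  let c := j - Spre ds t in
  if eta.1 then
    (if odd t then (Sodd ds t + c, 0) else (0, Seven ds t + c))
  else
    (if odd t then (0, Sodd ds t + c) else (Seven ds t + c, 0)).

Definition Tj (n : nat) (eta : eta_t) (j : nat) : seq (nat * nat) :=
  [seq ((vj eta j).1 + p, (vj eta j).2 + p) | p <- iota 0 (n - j).+1].

Definition T0 (n : nat) : seq (nat * nat) := [seq (p, p) | p <- iota 1 n].

Definition Teta (n : nat) (eta : eta_t) : seq (nat * nat) :=
  undup (T0 n ++ flatten [seq Tj n eta j | j <- iota 1 n]).

Definition inLambda (n : nat) (alpha : nat * nat) : bool :=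
  (1 <= alpha.1 + alpha.2 <= n).

(* the alpha-coordinate of \bar w *)
Definition barw (w alpha : nat * nat) : nat :=
  'C(w.1, alpha.1) * 'C(w.2, alpha.2).

Definition lin_rel (n : nat) (eta : eta_t) (a : nat * nat -> CC) : Prop :=
  forall alpha, inLambda n alpha ->
    (\sum_(w <- Teta n eta) a w * (barw w alpha)%:R = 0)%R.

(* Main.v *)
Require Import Defs.
From HB Require Import structures.
From mathcomp Require Import all_boot all_order all_algebra.
From mathcomp Require Import Rstruct complex.
From mathcomp Require Import ring.
Import GRing.Theory Num.Theory.
Local Open Scope ring_scope.

Lemma bin_id (y k : nat) : (y * 'C(y, k) = k.+1 * 'C(y, k.+1) + k * 'C(y, k))%N.
Proof.
rewrite mul_bin_left -mulnDl.
case: (leqP k y) => h; first by rewrite subnK.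
rewrite (bin_small h).
by rewrite !muln0.
Qed.

Lemma vand (xs : seq nat) (b : nat -> CC) : uniq xs ->
  (forall k, (k < size xs)%N -> \sum_(x <- xs) b x * ('C(x, k))%:R = 0) ->
  forall x, x \in xs -> b x = 0.
Proof.
elim: xs b => [|x0 xs IH] b //= /andP[nx0 uxs] H.
have Hb' : forall y, y \in xs -> b y * (y%:R - x0%:R) = 0.
  apply: IH => // k hk.
  have E1 := H k.+1 hk. have E0 := H k (ltnW hk).
  have : \sum_(y <- x0 :: xs) b y * (y%:R - x0%:R) * ('C(y, k))%:R = 0.
    rewrite (eq_bigr (fun y => k.+1%:R * (b y * ('C(y, k.+1))%:R) + k%:R * (b y * ('C(y, k))%:R) - x0%:R * (b y * ('C(y, k))%:R))); last first.
      move=> y _; have e := congr1 (fun n => n%:R : CC) (bin_id y k).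
      rewrite /= !natrD !natrM in e.
      by rewrite mulrBr mulrBl -(mulrA (b y)) e; ring.
    by rewrite sumrB big_split /= -!mulr_sumr E1 E0 !mulr0 !addr0 subr0.
  by rewrite big_cons subrr mulr0 mul0r add0r.
have Hxs : forall y, y \in xs -> b y = 0.
  move=> y hy; have := Hb' y hy; move/eqP; rewrite mulf_eq0 => /orP[/eqP //|].
  rewrite subr_eq0 eqr_nat => /eqP e.
  by move: nx0; rewrite -e hy.
have E := H 0%N (ltn0Sn _).
rewrite big_cons big_seq big1 ?addr0 in E; last by move=> y hy; rewrite Hxs ?mul0r.
move=> x; rewrite inE => /orP[/eqP ->|]; last exact: Hxs.
by move: E; rewrite bin0 mulr1.
Qed.

Lemma key (s : seq (nat*nat)) (a : nat*nat -> CC) (f : nat -> nat*nat) (c : seq nat)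
  (B : nat -> nat*nat -> nat) :
 uniq s -> uniq c -> injective f -> all (fun x => f x \in s) c ->
 (forall k, (k < size c)%N -> \sum_(w <- s) a w * (B k w)%:R = 0) ->
 (forall k w, w \in s -> w \notin map f c -> a w * (B k w)%:R = 0) ->
 (forall k x, B k (f x) = 'C(x,k)) ->
 forall v, v \in map f c -> a v = 0.
Proof.
move=> us uc fi sub Hs Hz HB v /mapP[x xc ->].
apply: (@vand c (fun x => a (f x)) uc _ x xc) => k hk.
have pe : perm_eq (map f c) [seq w <- s | w \in map f c].
  apply: uniq_perm; [by rewrite map_inj_uniq | exact: filter_uniq | ].
  move=> w; rewrite mem_filter; apply/idP/andP => [h|[]//]; split => //.
  by case/mapP: h => y yc ->; exact: (allP sub).
have E2 : \sum_(w <- s | w \notin map f c) a w * (B k w)%:R = 0.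
  by rewrite big_seq_cond big1 // => w /andP[ws wn]; exact: Hz.
have E1 : \sum_(w <- s | w \in map f c) a w * (B k w)%:R = \sum_(y <- c) a (f y) * ('C(y, k))%:R.
  rewrite -big_filter -(perm_big _ pe) big_map; apply: eq_bigr => y _; by rewrite HB.
by have := Hs k hk; rewrite (bigID (fun w => w \in map f c)) /= E2 addr0 E1.
Qed.

From mathcomp Require Import zify.
Local Close Scope ring_scope.

Theorem lemma2p7 (n l m : nat) (eta : eta_t) (a : nat * nat -> CC) (c : seq nat) :
  1 <= n -> 1 <= l <= n -> m <= n - l + 1 -> in_Omega n eta ->
  lin_rel n eta a ->
  size c = m -> sorted ltn c -> all (fun ci => 0 < ci) c ->
  (* first version: E = {(c_1,l),...,(c_m,l)} *)
  ((all (fun ci => (ci, l) \in Teta n eta) c ->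
    (forall u, u \in Teta n eta -> u \notin [seq (ci, l) | ci <- c] ->
       l <= u.2 -> a u = 0%R) ->
    forall v, v \in [seq (ci, l) | ci <- c] -> a v = 0%R)
  /\
  (* second version: E = {(l,c_1),...,(l,c_m)} *)
   (all (fun ci => (l, ci) \in Teta n eta) c ->
    (forall u, u \in Teta n eta -> u \notin [seq (l, ci) | ci <- c] ->
       l <= u.1 -> a u = 0%R) ->
    forall v, v \in [seq (l, ci) | ci <- c] -> a v = 0%R)).
Proof.
move=> n1 /andP[l1 ln] hm _ Hl hc sc _.
have us : uniq (Teta n eta) by exact: undup_uniq.
have uc : uniq c by exact: (sorted_uniq ltn_trans ltnn).
split=> sub Hz.
- apply: (@key _ a (fun x => (x, l)) c (fun k w => barw w (k, l)) us uc) => //.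
  + by move=> x y [].
  + move=> k hk; apply: Hl; rewrite /inLambda /=; apply/andP; split; lia.
  + move=> k w ws wn; case: (leqP l w.2) => h; first by rewrite Hz ?mul0r.
    by rewrite /barw /= (bin_small h) muln0 mulr0.
  + by move=> k x; rewrite /barw /= binn muln1.
- apply: (@key _ a (fun x => (l, x)) c (fun k w => barw w (l, k)) us uc) => //.
  + by move=> x y [].
  + move=> k hk; apply: Hl; rewrite /inLambda /=; apply/andP; split; lia.
  + move=> k w ws wn; case: (leqP l w.1) => h; first by rewrite Hz ?mul0r.
    by rewrite /barw /= (bin_small h) mul0n mulr0.
  + by move=> k x; rewrite /barw /= binn mul1n.
Qed.
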